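(* There is an absolute constant $c>0$ such that for all $\varepsilon\in(0,\tfrac18)$, $\mathsf C_{\rm rand}(\varepsilon;\mathsf O^{1^{\rm st}})\ge c/\varepsilon$.
   Context: A function $f:\mathbb R^d\to\mathbb R$ is $\beta$-smooth if it is continuously differentiable and $\nabla f$ is $\beta$-Lipschitz. A point $x$ is an $\varepsilon$-stationary point of $f$ if $\|\nabla f(x)\|<\varepsilon$. Let $\mathcal F(\beta,\Delta,d)$ be the class of $\beta$-smooth $f:\mathbb R^d\to\mathbb R$ with $f(0)-\inf f\le\Delta$. The oracle $\mathsf O^{1^{\rm st}}$ returns $\nabla f(x)$ on query $x$; the oracle $\mathsf O^{0^{\rm th}+1^{\rm st}}$ returns $(f(x),\nabla f(x))$. A deterministic algorithm chooses queries $x_1,x_2,\dots\in\mathbb R^d$ where each $x_{i}$ is a (measurable) function of $x_1,\dots,x_{i-1}$ and the oracle responses at them; a randomized algorithm is the same except that each $x_i$ may also depend on a random seed $U$ independent of $f$. $\mathsf C_{\det}(\varepsilon;\beta,\Delta,d,\mathsf O)$ is the least $N$ such that some deterministic algorithm using $\mathsf O$ has, for every $f\in\mathcal F(\beta,\Delta,d)$, an $\varepsilon$-stationary point of $f$ among $x_1,\dots,x_N$; $\mathsf C_{\rm rand}(\varepsilon;\beta,\Delta,d,\mathsf O)$ is the least $N$ such that some randomized algorithm using $\mathsf O$ has, for every $f\in\mathcal F(\beta,\Delta,d)$, with probability at least $1/2$ an $\varepsilon$-stationary point of $f$ among $x_1,\dots,x_N$. Abbreviate $\mathsf C_*(\varepsilon;\mathsf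 O)=\mathsf C_*(\varepsilon;1,1,1,\mathsf O)$ (one-dimensional, $1$-smooth, objective gap at most $1$). *)

(* Defs.v *)
From HB Require Import structures.
From mathcomp Require Import all_boot all_order all_algebra.
From mathcomp Require Import all_classical all_reals all_analysis.
Set Implicit Arguments. Unset Strict Implicit. Unset Printing Implicit Defensive.
Import Order.TTheory GRing.Theory Num.Theory.
Import numFieldNormedType.Exports.
Local Open Scope classical_set_scope.
Local Open Scope ring_scope.

Section Defs.
Context {R : realType}.

Definition smooth1 (f : R -> R) : Prop :=
  (forall x, derivable f x 1) /\
  (forall x y : R, `|(derive1 f) x - (derive1 f) y| <= `|x - y|).

(* The class F(1,1,1): 1-smooth f : R -> R with f(0) - inf f <= 1,
   i.e. f(0) - f(x) <= 1 for every x. *)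
Definition in_class (f : R -> R) : Prop :=
  smooth1 f /\ (forall x, f 0 - f x <= 1).

Definition stationary (eps : R) (f : R -> R) (x : R) : Prop := `|(derive1 f) x| < eps.

(* A randomized algorithm with seed space T: the (n+1)-st query (index n) is
   A n u h, where u is the seed and h the history [(x_1,g_1);...;(x_n,g_n)]
   of previous queries and oracle responses. *)
Definition rand_alg (T : Type) := nat -> T -> seq (R * R) -> R.

Fixpoint history (T : Type) (A : rand_alg T) (g : R -> R) (u : T) (n : nat)
  : seq (R * R) :=
  match n with
  | 0 => [::]
  | n'.+1 => let h := history A g u n' in
             let q := A n' u h in rcons h (q, g q)
  end.

Definition query (T : Type) (A : rand_alg T) (g : R -> R) (u : T) (n : nat) : R :=
  A n u (history A g u n).

Definition measurable_alg (d : measure_display) (T : measurableType d)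
  (A : rand_alg T) : Prop :=
  forall f : R -> R, in_class f ->
  forall n, measurable_fun [set: T] (fun u => query A (derive1 f) u n).

Definition rand_succeeds (d : measure_display) (T : measurableType d)
  (P : probability T R) (A : rand_alg T) (N : nat) (eps : R) : Prop :=
  forall f : R -> R, in_class f ->
  ((1/2 : R)%:E <= P [set u | exists2 i, (i < N)%N &
                         stationary eps f (query A (derive1 f) u i)])%E.

End Defs.

(* Main.v *)
Require Import Defs.
From HB Require Import structures.
From mathcomp Require Import all_boot all_order all_algebra.
From mathcomp Require Import all_classical all_reals all_analysis.
From mathcomp Require Import measurable_realfun.
From mathcomp Require Import ring lra zify.
Import Order.TTheory GRing.Theory Num.Theory.
Import numFieldNormedType.Exports.
Local Open Scope classical_set_scope.
Local Open Scope ring_scope.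

Lemma int_small (R : realType) (k : int) (p : R) : 0 < p ->
  - (2 * p) < k%:~R * p < 2 * p -> k = -1 \/ k = 0 \/ k = 1.
Proof.
move=> p0 /andP[h1 h2].
have a1 : (-2 : int)%:~R < k%:~R :> R.
  have e : (-2 : int)%:~R = - 2 :> R by rewrite intrN.
  by rewrite e -(ltr_pM2r p0); lra.
have a2 : k%:~R < (2 : int)%:~R :> R by rewrite -(ltr_pM2r p0); lra.
rewrite ltr_int in a1; rewrite ltr_int in a2.
lia.
Qed.

Lemma int_cases (k : int) : k = 0 \/ (1 <= k)%R \/ (k <= -1)%R.
Proof. lia. Qed.

Section Real.
Variable R : realType.
Implicit Types (r c p s t x y : R).

Definition tri r s : R := if s <= - r then 0 else if s <= 0 then s + r
  else if s <= r then r - s else 0.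
Definition Qt r s : R := if s <= - r then 0 else if s <= 0 then (s + r)^+2 / 2
  else if s <= r then r^+2 - (r - s)^+2/2 else r^+2.

Lemma Qt_taylor r s t : 0 < r -> `|Qt r t - Qt r s - tri r s * (t - s)| <= (t - s)^+2 / 2.
Proof.
move=> r0; rewrite /Qt /tri.
case: (lerP s (-r)) => h1; case: (lerP s 0) => h2; case: (lerP s r) => h3;
case: (lerP t (-r)) => h4; case: (lerP t 0) => h5; case: (lerP t r) => h6;
  rewrite ler_norml; apply/andP; split; rewrite !expr2;
  have := sqr_ge0 (t - s); rewrite expr2 => hq;
  try (exfalso; lra); try lra; try nra.
Qed.

Lemma tri_ge0 r s : 0 < r -> 0 <= tri r s.
Proof.
move=> r0; rewrite /tri.
case: (lerP s (-r)) => h1; case: (lerP s 0) => h2; case: (lerP s r) => h3; lra.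
Qed.

Lemma tri_lip r s t : 0 < r -> `|tri r s - tri r t| <= `|s - t|.
Proof.
move=> r0; rewrite /tri.
case: (lerP s (-r)) => h1; case: (lerP s 0) => h2; case: (lerP s r) => h3;
case: (lerP t (-r)) => h4; case: (lerP t 0) => h5; case: (lerP t r) => h6;
  have n1 := ler_norm (s - t); have n2 := ler_norm (t - s); rewrite distrC in n2;
  rewrite ler_norml; apply/andP; split; lra.
Qed.

Lemma tri_pos r s : 0 < r -> 0 < tri r s -> - r < s < r.
Proof.
move=> r0; rewrite /tri.
case: (lerP s (-r)) => h1; case: (lerP s 0) => h2; case: (lerP s r) => h3;
  move=> h; apply/andP; split; lra.
Qed.

Lemma tri_out r s : 0 < r -> (s <= - r) \/ (r <= s) -> tri r s = 0.
Proof.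
move=> r0 [] h; rewrite /tri.
  by rewrite h.
case: (lerP s (-r)) => h1 //; case: (lerP s 0) => h2; try lra.
case: (lerP s r) => h3 //; lra.
Qed.

Lemma Qt_left r s : 0 < r -> s <= - r -> Qt r s = 0.
Proof. by move=> r0 h; rewrite /Qt h. Qed.

Lemma Qt_right r s : 0 < r -> r <= s -> Qt r s = r ^+ 2.
Proof.
move=> r0 h; rewrite /Qt.
case: (lerP s (-r)) => h1; first lra.
case: (lerP s 0) => h2; first lra.
case: (lerP s r) => h3 //.
have -> : s = r by lra.
by rewrite subrr expr0n /= mul0r subr0.
Qed.

Lemma Qt_bounds r s : 0 < r -> 0 <= Qt r s <= r ^+ 2.
Proof.
move=> r0; rewrite /Qt.
case: (lerP s (-r)) => h1; case: (lerP s 0) => h2; case: (lerP s r) => h3;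
  apply/andP; split; rewrite ?expr2; try (exfalso; lra); try lra; try nra.
Qed.


Definition per p x : R := x - (Num.floor (x / p))%:~R * p.
Definition Fh r c p s : R := c * s - Qt r (s - p / 2).
Definition f0 r c p x : R := Fh r c p (per p x).
Definition trip r p x : R := tri r (per p x - p / 2).
Definition g0 r c p x : R := c - trip r p x.

Lemma per_itv p x : 0 < p -> 0 <= per p x < p.
Proof.
move=> p0; have /andP[h1 h2] := floor_itv (x / p).
rewrite /per; set m := Num.floor (x / p) in h1 h2 *.
rewrite intrD in h2.
rewrite -(ler_pM2r p0) mulrAC -mulrA divff ?gt_eqF // mulr1 in h1.
rewrite -(ltr_pM2r p0) mulrAC -mulrA divff ?gt_eqF // mulr1 in h2.
apply/andP; split; lra.
Qed.

Lemma per_shift p y (n : int) : 0 < p ->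
  exists k : int, y - n%:~R * p - per p y = k%:~R * p.
Proof.
move=> p0; exists (Num.floor (y / p) - n); rewrite /per intrB; ring.
Qed.

Lemma repr_lem r c p y (n : int) : 0 < r -> 2 * r < p -> c * p = r ^+ 2 ->
  r - p / 2 <= y - n%:~R * p <= 3 * p / 2 - r ->
  f0 r c p y = Fh r c p (y - n%:~R * p) /\ trip r p y = tri r (y - n%:~R * p - p / 2).
Proof.
move=> r0 rp cp /andP[b1 b2].
have p0 : 0 < p by lra.
have /andP[q1 q2] := per_itv p y p0.
have [k ek] := per_shift p y n p0.
have hk : - (2 * p) < k%:~R * p < 2 * p by rewrite -ek; apply/andP; split; lra.
rewrite /f0 /trip.
have [kE|[kE|kE]] := @int_small _ k p p0 hk; rewrite kE ?mulN1r ?mul1r ?mul0r in ek.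
- have e : per p y = y - n%:~R * p + p by lra.
  rewrite e /Fh; split.
    rewrite (Qt_right _ _ r0); last lra.
    rewrite (Qt_left _ _ r0); last lra. 
    rewrite -cp; ring.
  rewrite (tri_out _ _ r0); last lra.
  by rewrite (tri_out _ _ r0); last lra.
- have e : per p y = y - n%:~R * p by lra.
  by rewrite e.
- have e : per p y = y - n%:~R * p - p by lra.
  rewrite e /Fh; split.
    rewrite (Qt_left _ _ r0); last lra.
    rewrite (Qt_right _ _ r0); last lra. 
    rewrite -cp; ring.
  rewrite (tri_out _ _ r0); last lra.
  by rewrite (tri_out _ _ r0); last lra.
Qed.


Lemma f0_taylor r c p x y : 0 < r -> 2 * r < p -> c * p = r ^+ 2 ->
  `|y - x| < p / 2 - r ->
  `|f0 r c p y - f0 r c p x - g0 r c p x * (y - x)| <= 1 / 2 * (y - x) ^+ 2.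
Proof.
move=> r0 rp cp hxy.
have p0 : 0 < p by lra.
set n := Num.floor (x / p).
have ex : per p x = x - n%:~R * p by [].
have /andP[q1 q2] := per_itv p x p0.
move: hxy; rewrite ltr_norml => /andP[d1 d2].
have byy : r - p / 2 <= y - n%:~R * p <= 3 * p / 2 - r by apply/andP; split; lra.
have bxx : r - p / 2 <= x - n%:~R * p <= 3 * p / 2 - r by apply/andP; split; lra.
have [hy _] := @repr_lem r c p y n r0 rp cp byy.
have [hx tx] := @repr_lem r c p x n r0 rp cp bxx.
rewrite hy /g0 hx tx.
have := Qt_taylor r (x - n%:~R * p - p / 2) (y - n%:~R * p - p / 2) r0.
have -> : y - n%:~R * p - p / 2 - (x - n%:~R * p - p / 2) = y - x by ring.
rewrite /Fh => h.
rewrite (_ : _ - _ - _ = - (Qt r (y - n%:~R * p - p / 2) - Qt r (x - n%:~R * p - p / 2)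
   - tri r (x - n%:~R * p - p / 2) * (y - x))); last by ring.
rewrite normrN; lra.
Qed.

Lemma trip_ge r p y (n : int) : 0 < r -> 2 * r < p ->
  tri r (y - n%:~R * p - p / 2) <= trip r p y.
Proof.
move=> r0 rp.
have p0 : 0 < p by lra.
have /andP[q1 q2] := per_itv p y p0.
have [k ek] := per_shift p y n p0.
have [k0|[k1|k1]] : k = 0 \/ (1 <= k)%R \/ (k <= -1)%R by lia.
- rewrite k0 mul0r in ek; rewrite /trip.
  by have -> : per p y = y - n%:~R * p by lra.
- rewrite -(ler_int R) in k1.
  have hh : p <= k%:~R * p by rewrite -{1}[p]mul1r ler_pM2r.
  rewrite (tri_out _ _ r0); first by rewrite /trip; apply: tri_ge0.
  right; lra.
- rewrite -(ler_int R) in k1.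
  have hh : k%:~R * p <= -1 * p by rewrite ler_pM2r // intrN.
  rewrite (tri_out _ _ r0); first by rewrite /trip; apply: tri_ge0.
  left; lra.
Qed.

Lemma trip_lip r p x y : 0 < r -> 2 * r < p ->
  `|trip r p x - trip r p y| <= `|x - y|.
Proof.
move=> r0 rp.
have key : forall x y, trip r p x - trip r p y <= `|x - y|.
  move=> a b.
  set n := Num.floor (a / p).
  have ea : trip r p a = tri r (a - n%:~R * p - p / 2) by [].
  have := trip_ge r p b n r0 rp.
  have := tri_lip r (a - n%:~R * p - p / 2) (b - n%:~R * p - p / 2) r0.
  have -> : a - n%:~R * p - p / 2 - (b - n%:~R * p - p / 2) = a - b by ring.
  rewrite ea => h1 h2.
  have := ler_norm (tri r (a - n%:~R * p - p / 2) - tri r (b - n%:~R * p - p / 2)).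
  lra.
rewrite ler_norml; apply/andP; split; last exact: key.
have := key y x; rewrite distrC; lra.
Qed.

Lemma f0_bounds r c p x : 0 < r -> 0 < p -> c * p = r ^+ 2 -> 0 <= c ->
  - r ^+ 2 <= f0 r c p x <= r ^+ 2.
Proof.
move=> r0 p0 cp c0.
have /andP[q1 q2] := per_itv p x p0.
have /andP[b1 b2] := Qt_bounds r (per p x - p / 2) r0.
rewrite /f0 /Fh; apply/andP; split; nra.
Qed.

Lemma trip_disj r p a b x : 0 < r -> 2 * r < p ->
  2 * r <= b - a <= p - 2 * r ->
  0 < trip r p (x - a) -> 0 < trip r p (x - b) -> False.
Proof.
move=> r0 rp /andP[h1 h2] ta tb.
have p0 : 0 < p by lra.
move: (tri_pos _ _ r0 ta) (tri_pos _ _ r0 tb) => /andP[a1 a2] /andP[b1 b2].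
rewrite /per in a1 a2 b1 b2.
set m := Num.floor ((x - a) / p) in a1 a2.
set n := Num.floor ((x - b) / p) in b1 b2.
have [e|[e|e]] : (m - n = 0 \/ (1 <= m - n)%R \/ (m - n <= -1)%R) by lia.
- have : m%:~R = n%:~R :> R by rewrite (_ : m = n) //; lia.
  move=> E; rewrite E in a1 a2; lra.
- rewrite -(ler_int R) intrB in e.
  have : p <= (m%:~R - n%:~R) * p by rewrite -{1}[p]mul1r ler_pM2r.
  move=> hh; nra.
- rewrite -(ler_int R) intrB in e.
  have : (m%:~R - n%:~R) * p <= -1 * p by rewrite ler_pM2r // intrN.
  move=> hh; nra.
Qed.

End Real.
Arguments tri {R}. Arguments Qt {R}. Arguments per {R}. Arguments Fh {R}.
Arguments f0 {R}. Arguments trip {R}. Arguments g0 {R}.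

Lemma taylor_deriv (R : realType) (f : R -> R) (x G K d : R) : 0 < d -> 0 <= K ->
  (forall y, `|y - x| < d -> `|f y - f x - G * (y - x)| <= K * (y - x)^+2) ->
  derivable f x 1 /\ derive1 f x = G.
Proof.
move=> d0 K0 H.
have cv : (fun h => h^-1 *: (f (h + x) - f x)) @ 0^' --> G.
  apply/cvgrPdist_lt => e e0.
  have mp : 0 < Num.min d (e / (K + 1)).
    by rewrite lt_min d0 /=; apply: divr_gt0 => //; lra.
  near=> t.
  have ht : `|t| < Num.min d (e / (K + 1)) by near: t; exact: dnbhs0_lt.
  have t0 : t != 0 by near: t; exact: nbhs_dnbhs_neq.
  move: ht; rewrite lt_min => /andP[htd hte].
  have := H (t + x); rewrite addrK => /(_ htd) Ht.
  have tn : 0 < `|t| by rewrite normr_gt0.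
  have -> : G - t^-1 *: (f (t + x) - f x) = - (t^-1 * (f (t + x) - f x - G * t)).
    rewrite /GRing.scale /=; field; exact: t0.
  rewrite normrN normrM normrV ?unitfE //.
  rewrite -(ltr_pM2l tn) mulrA mulfV ?lt0r_neq0 // mul1r.
  apply: (le_lt_trans Ht).
  have -> : t^+2 = `|t| * `|t| by rewrite -normrM -expr2 ger0_norm // sqr_ge0.
  rewrite ltr_pdivlMr in hte; last lra.
  nra.
split; last exact: cvg_lim.
rewrite /derivable; apply/cvg_ex; exists G.
apply: cvg_trans cv; apply: near_eq_cvg; near=> h.
by rewrite /= /shift [h *: 1]mulr1.
Unshelve. all: by end_near.
Qed.

Section Count.
Variable R : realType.
Variables (d : measure_display) (T : measurableType d) (P : probability T R)
  (A : @rand_alg R T).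

Lemma hist_eq (g g0 : R -> R) u i :
  (forall k, (k < i)%N -> g (query A g u k) = g0 (query A g u k)) ->
  history A g u i = history A g0 u i.
Proof.
elim: i => [//|i IH] H /=.
have e : history A g u i = history A g0 u i by apply: IH => k hk; apply: H; lia.
have := H i (ltnSn i); rewrite /query e => ->.
by [].
Qed.

Lemma mpre (h : T -> R) (Y : set R) : measurable_fun setT h -> measurable Y ->
  measurable (h @^-1` Y).
Proof. by move=> mh mY; have := mh measurableT Y mY; rewrite setTI. Qed.


Lemma count_lemma (N K : nat) (eps c0 : R) (F G : nat -> R -> R) :
  measurable_alg A -> rand_succeeds P A N eps ->
  (forall j, (j < K)%N -> in_class (F j)) ->
  (forall j, (j < K)%N -> derive1 (F j) = G j) ->
  (forall j, (j < K)%N -> measurable_fun setT (G j)) ->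
  (forall j x, (j < K)%N -> `|G j x| < eps -> G j x <> c0) ->
  (forall j k x, (j < K)%N -> (k < K)%N -> G j x <> c0 -> G k x <> c0 -> j = k) ->
  (K%:R / 2 : R) <= N%:R.
Proof.
move=> mA sA Fin Fd Gm Gst Gdis.
pose q j i u := query A (G j) u i.
have mq j i : (j < K)%N -> measurable_fun setT (q j i).
  by move=> jK; have := mA (F j) (Fin j jK) i; rewrite Fd.
have mGq j i : (j < K)%N -> measurable_fun setT (fun u => G j (q j i u)).
  by move=> jK; apply: (measurableT_comp (Gm j jK) (mq j i jK)).
pose E i j := (fun u => G j (q j i u)) @^-1` (~` [set c0]) `&`
   \bigcap_(k in `I_i) ((fun u => G j (q j k u)) @^-1` [set c0]).
have mE i j : (j < K)%N -> measurable (E i j).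
  move=> jK; apply: measurableI.
    apply: mpre; first exact: mGq.
    apply: measurableC; exact: measurable_set1.
  apply: fin_bigcap_measurable; first exact: finite_II.
  move=> k _; apply: mpre; first exact: mGq.
  exact: measurable_set1.
pose S j := [set u | exists2 i, (i < N)%N &
                         stationary eps (F j) (query A (derive1 (F j)) u i)].
have mS j : (j < K)%N -> measurable (S j).
  move=> jK.
  have -> : S j = \big[setU/set0]_(i < N)
      ((fun u => `|G j (q j i u)|) @^-1` [set x | x < eps]).
    rewrite -(bigcup_mkord N (fun i => (fun u => `|G j (q j i u)|) @^-1` [set x | x < eps])).
    apply/seteqP; split => u /=.
      by move=> [i iN h]; exists i => //; move: h; rewrite /stationary Fd.
    by move=> [i /= iN h]; exists i => //; rewrite /stationary Fd.
  apply: bigsetU_measurable => i _; apply: mpre; last first.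
    by apply: open_measurable; apply: open_lt.
  apply: (measurableT_comp _ (mGq j i jK)).
  by apply: continuous_measurable_fun; apply: norm_continuous.
have SE j : (j < K)%N -> S j `<=` \big[setU/set0]_(i < N) E i j.
  move=> jK u [i0 i0N]; rewrite /stationary Fd // => h0.
  rewrite -(bigcup_mkord N (fun i => E i j)).
  have ex : exists i, G j (q j i u) != c0 by exists i0; apply/eqP; apply: Gst.
  case: (ex_minnP ex) => i /eqP Hi Hmin.
  have ii0 : (i <= i0)%N by apply: Hmin; apply/eqP; apply: Gst.
  exists i; first by rewrite /=; lia.
  split; first exact: Hi.
  move=> k /= ki; apply/eqP; apply: contraT => hk.
  by have := Hmin k hk; lia.
have Eq i j u : E i j u -> q j i u = query A (fun _ => c0) u i.
  move=> [_ Hk]; rewrite /q /query (@hist_eq (G j) (fun _ => c0)) //.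
have Edis i j k u : (j < K)%N -> (k < K)%N -> E i j u -> E i k u -> j = k.
  move=> jK kK Ej Ek; apply: (Gdis j k (query A (fun _ => c0) u i)) => //.
    by rewrite -(Eq i j u Ej); case: Ej.
  by rewrite -(Eq i k u Ek); case: Ek.
have h1 j : (j < K)%N -> ((1/2 : R)%:E <= P (S j))%E.
  by move=> jK; apply: (sA (F j) (Fin j jK)).
have h2 j : (j < K)%N -> (P (S j) <= \sum_(i < N) P (E i j))%E.
  move=> jK; apply: (@content_subadditive _ _ _ P (S j) (fun i => E i j) N).
  - by move=> k _; apply: mE.
  - exact: mS.
  - exact: SE.
have h3 i : (\sum_(j < K) P (E i j) <= 1)%E.
  rewrite -(@measure_bigsetU_ord _ _ _ P K xpredT (fun j : 'I_K => E i j)).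
  - apply: probability_le1; apply: bigsetU_measurable => j _; apply: mE.
    exact: ltn_ord.
  - by move=> j; apply: mE; exact: ltn_ord.
  - move=> j k _ _ [u [Ej Ek]]; apply: val_inj => /=.
    by apply: (Edis i j k u) => //; exact: ltn_ord.
have : ((K%:R / 2 : R)%:E <= N%:R%:E)%E.
  have -> : (K%:R / 2 : R)%:E = (\sum_(j < K) (1/2 : R)%:E)%E.
    by rewrite sumEFin sumr_const card_ord -(mulr_natl (1/2 : R) K) mul1r.
  apply: le_trans.
    apply: lee_sum => j _; apply: h1; exact: ltn_ord.
  apply: le_trans.
    apply: lee_sum => j _; apply: h2; exact: ltn_ord.
  rewrite exchange_big /=.
  apply: le_trans.
    apply: lee_sum => i _; exact: h3.
  by rewrite sumEFin sumr_const card_ord.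
by rewrite lee_fin.
Qed.

End Count.

Lemma lip_cont (R : realType) (g : R -> R) :
  (forall x y, `|g x - g y| <= `|x - y|) -> continuous g.
Proof.
move=> H x; apply/cvgrPdist_lt => e e0.
near=> y.
apply: le_lt_trans (H x y) _.
near: y.
exists e => // z /=.
Unshelve. all: by end_near.
Qed.

Lemma Fj_deriv (R : realType) (r c p a x : R) : 0 < r -> 2 * r < p -> c * p = r ^+ 2 ->
  derivable (fun z => f0 r c p (z - a)) x 1 /\
  derive1 (fun z => f0 r c p (z - a)) x = g0 r c p (x - a).
Proof.
move=> r0 rp cp.
apply: (@taylor_deriv R (fun z => f0 r c p (z - a)) x (g0 r c p (x - a)) (1/2) (p / 2 - r)); [lra | lra |].
move=> y hy.
have e : y - a - (x - a) = y - x by ring.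
have := @f0_taylor R r c p (x - a) (y - a) r0 rp cp.
rewrite e => /(_ hy); lra.
Qed.

Lemma Fj_class (R : realType) (r c p a : R) : 0 < r -> 2 * r < p -> c * p = r ^+ 2 ->
  0 <= c -> 2 * r ^+ 2 <= 1 ->
  in_class (fun z => f0 r c p (z - a)) /\
  derive1 (fun z => f0 r c p (z - a)) = (fun x => g0 r c p (x - a)).
Proof.
move=> r0 rp cp c0 r1.
have p0 : 0 < p by lra.
have dE : derive1 (fun z => f0 r c p (z - a)) = (fun x => g0 r c p (x - a)).
  by apply/funext => x; case: (@Fj_deriv R r c p a x r0 rp cp).
split => //; split; first split.
- by move=> x; case: (@Fj_deriv R r c p a x r0 rp cp).
- move=> x y; rewrite dE /g0.
  have := @trip_lip R r p (y - a) (x - a) r0 rp.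
  have -> : y - a - (x - a) = - (x - y) by ring.
  rewrite normrN.
  have -> : c - trip r p (x - a) - (c - trip r p (y - a)) = trip r p (y - a) - trip r p (x - a)
    by ring.
  by [].
- move=> x.
  have /andP[a1 a2] := @f0_bounds R r c p (0 - a) r0 p0 cp c0.
  have /andP[b1 b2] := @f0_bounds R r c p (x - a) r0 p0 cp c0.
  lra.
Qed.

Theorem theorem2p1 (R : realType) :
  exists c : R, 0 < c /\
  forall eps : R, 0 < eps -> eps < 1 / 8 ->
  forall (d : measure_display) (T : measurableType d) (P : probability T R)
         (A : rand_alg T) (N : nat),
    measurable_alg A -> rand_succeeds P A N eps ->
    c / eps <= N%:R.
Proof.
exists (1 / 32); split; first lra.
move=> eps e0 e8 d T P A N mA sA.
pose r : R := 1 / 2.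
pose c : R := 2 * eps.
pose p : R := 1 / (8 * eps).
have r0 : 0 < r by rewrite /r; lra.
have rp : 2 * r < p.
  rewrite /r /p ltr_pdivlMr; last lra.
  lra.
have cp : c * p = r ^+ 2 by rewrite /c /p /r; field; lra.
have c0 : 0 <= c by rewrite /c; lra.
have r1 : 2 * r ^+ 2 <= 1 by rewrite /r; lra.
have p0 : 0 < p by lra.
pose K := Num.truncn p.
have /andP[K1 K2] : K%:R <= p < K.+1%:R by apply: truncn_itv; lra.
pose F (j : nat) := fun z => f0 r c p (z - j%:R).
pose G (j : nat) := fun x => g0 r c p (x - j%:R).
have HF j := @Fj_class R r c p j%:R r0 rp cp c0 r1.
have trip0 j x : G j x <> c -> 0 < trip r p (x - j%:R).
  move=> h; rewrite lt_neqAle tri_ge0 // andbT.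
  by apply/eqP => e; apply: h; rewrite /G /g0 -e subr0.
have cnt : (K%:R / 2 : R) <= N%:R.
  apply: (@count_lemma R d T P A N K eps c F G mA sA).
  - by move=> j _; case: (HF j).
  - by move=> j _; case: (HF j).
  - move=> j _; apply: continuous_measurable_fun; apply: lip_cont => x y.
    rewrite /G /g0.
    have := @trip_lip R r p (y - j%:R) (x - j%:R) r0 rp.
    have -> : y - j%:R - (x - j%:R) = - (x - y) by ring.
    rewrite normrN.
    have -> : c - trip r p (x - j%:R) - (c - trip r p (y - j%:R))
      = trip r p (y - j%:R) - trip r p (x - j%:R) by ring.
    by [].
  - move=> j x _ h e; rewrite e /c in h.
    have : `|2 * eps| = 2 * eps by rewrite ger0_norm //; lra.
    lra.
  - have key : forall j k x, (j < k)%N -> (k < K)%N -> G j x <> c -> G k x <> c -> False.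
      move=> j k x jk kK hj hk.
      apply: (@trip_disj R r p j%:R k%:R x r0 rp); last 2 first.
        exact: trip0.
        exact: trip0.
      have h1 : (j.+1%:R <= k%:R :> R) by rewrite ler_nat.
      have h2 : (k.+1%:R <= K%:R :> R) by rewrite ler_nat.
      rewrite -natr1 in h1; rewrite -natr1 in h2.
      have j0 : 0 <= j%:R :> R by [].
      apply/andP; split; rewrite /r; lra.
    move=> j k x jK kK hj hk.
    case: (ltngtP j k) => // jk.
      by exfalso; apply: (key j k x).
    by exfalso; apply: (key k j x).
have Kge : 1 <= K%:R :> R.
  have : (0 < K)%N.
    rewrite -(ltr0n R); rewrite -natr1 in K2.
    have : 1 < p by move: rp; rewrite /r; lra.
    lra.
  by rewrite -(ler_nat R).
rewrite -natr1 in K2.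
have -> : 1 / 32 / eps = p / 4 by rewrite /p; field; lra.
lra.
Qed.
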